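(* Let $G=\{(1),(12)(34),(13)(24),(14)(23)\}\le S_4$, whose normalizer in $S_4$ is $S_4$. The homomorphism $S_4\to Aut_0(T_{4;G})$, $\nu\mapsto\hat\nu$, has kernel $G$ and image (the group of hidden symmetries) of order $6$, isomorphic to $S_3$. Writing $P_{ij}$ for the $G$-orbit of $(\{i,j\},\{k,l\})$ in $T_{(2^2)}$ and $Q_{ij}$ for the $G$-orbit of $(\{i,j\},\{k\},\{l\})$ in $T_{(2,1^2)}$ (where $\{i,j,k,l\}=\{1,2,3,4\}$; note $P_{ij}=P_{kl}$, $Q_{ij}=Q_{kl}$), one has: $\hat\nu(P_{ij})=P_{\nu(i)\nu(j)}$ and $\hat\nu(Q_{ij})=Q_{\nu(i)\nu(j)}$; in particular $\widehat{(13)}$ interchanges $P_{12}$ and $P_{14}$ and fixes $P_{13}$, and likewise interchanges $Q_{12}$ and $Q_{14}$ and fixes $Q_{13}$. Moreover, for each transposition $\nu$ the automorphism $\hat\nu$ acts on the six elements of $T_{(1^4);G}$ as a product of three disjoint transpositions, and for each $3$-cycle $\nu$ it acts on them as a product of two disjoint $3$-cycles.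
   Context: For a partition $\lambda=(\lambda_1\ge\dots\ge\lambda_k>0)$ of $4$, a tabloid of shape $\lambda$ is a sequence $A=(A_1,\dots,A_k)$ of pairwise disjoint subsets of $\{1,2,3,4\}$ with $|A_i|=\lambda_i$; $T_\lambda$ is their set. $S_4$ acts by $\zeta A=(\zeta(A_1),\dots,\zeta(A_k))$. Tabloids are partially ordered by $A\le B$ iff $A_1\cup\dots\cup A_i\subseteq B_1\cup\dots\cup B_i$ for all $i\ge1$ (missing rows empty); $T_{\lambda;G}$ is the set of $G$-orbits in $T_\lambda$, $T_{4;G}$ the set of all $G$-orbits of tabloids, ordered by $a\le b$ iff there are $A\in a$, $B\in b$ with $A\le B$. $Aut_0(T_{4;G})$ is the group of order-automorphisms of $T_{4;G}$ mapping each $T_{\mu;G}$ onto itself. For $\nu$ normalizing $G$, $\hat\nu$ is the map $O_G(A)\mapsto O_G(\nu A)$. *)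

(* Defs.v *)
(* Points {1,2,3,4} of the paper are 'I_4 = {0,1,2,3}
   (paper's k is our k-1). *)
From mathcomp Require Import all_boot all_fingroup.
Set Implicit Arguments. Unset Strict Implicit. Unset Printing Implicit Defensive.

(* A tabloid of 4 is stored as a 4-row function, rows beyond the length of
   the shape being empty ("missing rows empty"). *)
Definition tab := {ffun 'I_4 -> {set 'I_4}}.

Definition shape (A : tab) : seq nat := [seq #|A i| | i <- enum 'I_4].

(* lambda is a partition of 4, padded with zeros to length 4 *)
Definition partition4 (lam : seq nat) : bool :=
  [&& size lam == 4, sorted geq lam & sumn lam == 4].

Definition rows_disjoint (A : tab) : bool :=
  [forall i, forall j, (i != j) ==> [disjoint A i & A j]].

Definition Tshape (lam : seq nat) : {set tab} :=
  [set A : tab | (shape A == lam) && rows_disjoint A].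

Definition Tall : {set tab} :=
  [set A : tab | partition4 (shape A) && rows_disjoint A].

Definition tabact (z : 'S_4) (A : tab) : tab := [ffun i => z @: A i].

Definition leT (A B : tab) : bool :=
  [forall i : 'I_4, (\bigcup_(j : 'I_4 | j <= i) A j)
                      \subset (\bigcup_(j : 'I_4 | j <= i) B j)].

Section Orbits.
Variable G : {set 'S_4}.

Definition orbG (A : tab) : {set tab} := [set tabact g A | g in G].
Definition TshapeG (lam : seq nat) : {set {set tab}} :=
  [set orbG A | A in Tshape lam].
Definition TG : {set {set tab}} := [set orbG A | A in Tall].
Definition leO (a b : {set tab}) : bool :=
  [exists A in a, exists B in b, leT A B].

(* f (a map on T_{4;G}, extended arbitrarily off T_{4;G}) is in Aut_0(T_{4;G}) *)
Definition Aut0 (f : {set tab} -> {set tab}) : Prop :=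
  [/\ {in TG, forall X, f X \in TG},
      {in TG &, injective f},
      {in TG, forall Y, exists2 X, X \in TG & f X = Y},
      {in TG &, forall X Y, leO (f X) (f Y) = leO X Y} &
      forall lam, partition4 lam -> f @: TshapeG lam = TshapeG lam].

Definition hat (nu : 'S_4) : {ffun {set tab} -> {set tab}} :=
  [ffun X => if X \in TG then
               (if [pick A in X] is Some A then orbG (tabact nu A) else X)
             else X].
End Orbits.

Definition p0 : 'I_4 := inord 0.
Definition p1 : 'I_4 := inord 1.
Definition p2 : 'I_4 := inord 2.
Definition p3 : 'I_4 := inord 3.

Definition V4 : {set 'S_4} :=
  [set 1%g; (tperm p0 p1 * tperm p2 p3)%g; (tperm p0 p2 * tperm p1 p3)%g;
          (tperm p0 p3 * tperm p1 p2)%g].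

Definition tabP (i j : 'I_4) : tab :=
  [ffun r : 'I_4 => if r == p0 then [set i; j]
                    else if r == p1 then ~: [set i; j] else set0].
Definition tabQ (i j : 'I_4) : tab :=
  let C := ~: [set i; j] in
  let k := odflt i [pick x in C] in
  [ffun r : 'I_4 => if r == p0 then [set i; j]
                    else if r == p1 then [set k]
                    else if r == p2 then C :\ k else set0].

Definition P (i j : 'I_4) : {set tab} := orbG V4 (tabP i j).
Definition Q (i j : 'I_4) : {set tab} := orbG V4 (tabQ i j).

Definition hidden : {set {ffun {set tab} -> {set tab}}} :=
  [set hat V4 nu | nu : 'S_4].

(* Main.v *)
Require Import Defs.
From mathcomp Require Import all_boot all_fingroup.
Set Implicit Arguments. Unset Strict Implicit. Unset Printing Implicit Defensive.

Section Helpers.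
Local Open Scope group_scope.

Lemma p0E : p0 = @Ordinal 4 0 isT. Proof. by apply: val_inj; rewrite /= inordK. Qed.
Lemma p1E : p1 = @Ordinal 4 1 isT. Proof. by apply: val_inj; rewrite /= inordK. Qed.
Lemma p2E : p2 = @Ordinal 4 2 isT. Proof. by apply: val_inj; rewrite /= inordK. Qed.
Lemma p3E : p3 = @Ordinal 4 3 isT. Proof. by apply: val_inj; rewrite /= inordK. Qed.
Definition pE := (p0E, p1E, p2E, p3E).

Lemma tpE (x y z : 'I_4) : tperm x y z = if z == x then y else if z == y then x else z.
Proof. by case: tpermP => [->|->|/eqP/negbTE-> /eqP/negbTE->]; rewrite ?eqxx //; case: eqP. Qed.

Definition l4 : seq 'I_4 := [:: @Ordinal 4 0 isT; @Ordinal 4 1 isT; @Ordinal 4 2 isT; @Ordinal 4 3 isT].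
Lemma l4P (x : 'I_4) : x \in l4.
Proof. by case: x => [[|[|[|[|?]]]] H] //; rewrite /l4 !inE -!val_eqE. Qed.
Lemma allL (P : pred 'I_4) : all P l4 -> forall x, P x.
Proof. by move/allP => H x; apply: H; apply: l4P. Qed.
Lemma allL2 (P : 'I_4 -> 'I_4 -> bool) :
  all (fun a => all (P a) l4) l4 -> forall a b, P a b.
Proof. by move=> H a; apply: allL; apply: (allL H). Qed.
Lemma allL3 (P : 'I_4 -> 'I_4 -> 'I_4 -> bool) :
  all (fun a => all (fun b => all (P a b) l4) l4) l4 -> forall a b c, P a b c.
Proof. by move=> H a; apply: allL2; apply: (allL H). Qed.
Lemma allL4 (P : 'I_4 -> 'I_4 -> 'I_4 -> 'I_4 -> bool) :
  all (fun a => all (fun b => all (fun c => all (P a b c) l4) l4) l4) l4 -> forall a b c d, P a b c d.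
Proof. by move=> H a; apply: allL3; apply: (allL H). Qed.
Lemma allL5 (P : 'I_4 -> 'I_4 -> 'I_4 -> 'I_4 -> 'I_4 -> bool) :
  all (fun a => all (fun b => all (fun c => all (fun d => all (P a b c d) l4) l4) l4) l4) l4 ->
  forall a b c d e, P a b c d e.
Proof. by move=> H a; apply: allL4; apply: (allL H). Qed.
Lemma allL6 (P : 'I_4 -> 'I_4 -> 'I_4 -> 'I_4 -> 'I_4 -> 'I_4 -> bool) :
  all (fun a => all (fun b => all (fun c => all (fun d => all (fun e => all (P a b c d e) l4) l4) l4) l4) l4) l4 ->
  forall a b c d e f, P a b c d e f.
Proof. by move=> H a; apply: allL5; apply: (allL H). Qed.

Lemma ord4P (x : 'I_4) : [\/ x = p0, x = p1, x = p2 | x = p3].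
Proof.
rewrite !pE; case: x => [[|[|[|[|?]]]] H] //.
- by constructor 1; apply: val_inj.
- by constructor 2; apply: val_inj.
- by constructor 3; apply: val_inj.
- by constructor 4; apply: val_inj.
Qed.

Definition vals (g : 'S_4) := (g p0, g p1, g p2, g p3).
Definition inV4b (g : 'S_4) : bool :=
  [|| vals g == (p0,p1,p2,p3), vals g == (p1,p0,p3,p2), vals g == (p2,p3,p0,p1)
    | vals g == (p3,p2,p1,p0)].

Lemma eq_vals (g h : 'S_4) : vals g = vals h -> g = h.
Proof. case=> h0 h1 h2 h3; apply/permP => x; by case: (ord4P x) => ->. Qed.

Lemma memV4 g : (g \in V4) = inV4b g.
Proof.
rewrite /V4 !inE -!orbA; apply/idP/idP.
  case/or4P => /eqP ->; rewrite /inV4b /vals ?permM ?perm1 ?tpE !pE; by vm_compute.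
rewrite /inV4b; case/or4P => /eqP H;
  [have -> : g = 1 | have -> : g = tperm p0 p1 * tperm p2 p3
  | have -> : g = tperm p0 p2 * tperm p1 p3 | have -> : g = tperm p0 p3 * tperm p1 p2];
  rewrite ?eqxx ?orbT //; apply/eq_vals;
  rewrite H /vals ?permM ?perm1 ?tpE !pE; apply/eqP; by vm_compute.
Qed.

Lemma Dq (a b c d : 'I_4) : uniq [:: a; b; c; d] -> tperm a b * tperm c d \in V4.
Proof.
apply/implyP; rewrite memV4 /inV4b /vals !permM ?tpE !pE.
move: a b c d; apply: allL4; by vm_compute.
Qed.

Lemma V4M g h : g \in V4 -> h \in V4 -> g * h \in V4.
Proof.
rewrite !memV4 /inV4b /vals !permM.
case/or4P => /eqP [-> -> -> ->]; case/or4P => /eqP [-> -> -> ->]; rewrite !pE; by vm_compute.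
Qed.

Lemma V4sq g : g \in V4 -> g * g = 1.
Proof.
rewrite memV4 /inV4b => Hg; apply: eq_vals; move: Hg; rewrite /vals !permM !perm1.
by case/or4P => /eqP [e0 e1 e2 e3]; rewrite ?e0 ?e1 ?e2 ?e3 ?e0 ?e1 ?e2 ?e3.
Qed.

Lemma V4V g : g \in V4 -> g^-1 = g.
Proof. by move=> Hg; rewrite -[g^-1]mulg1 -(V4sq Hg) mulKg. Qed.

Lemma V4_1 : 1 \in V4.
Proof. by rewrite /V4 !inE eqxx. Qed.

Lemma uniqp (l : seq 'I_4) (x : 'S_4) : uniq l -> uniq (map x l).
Proof. by rewrite map_inj_uniq //; apply: perm_inj. Qed.

Lemma V4cases g : g \in V4 -> [\/ g = 1, g = tperm p0 p1 * tperm p2 p3,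
  g = tperm p0 p2 * tperm p1 p3 | g = tperm p0 p3 * tperm p1 p2].
Proof.
rewrite /V4 !inE -!orbA; case/or4P => /eqP ->;
  [constructor 1|constructor 2|constructor 3|constructor 4]; done.
Qed.

Lemma V4J g x : g \in V4 -> g ^ x \in V4.
Proof.
case/V4cases => ->; first by rewrite conj1g V4_1.
- rewrite conjMg !tpermJ; apply: Dq; move: (@uniqp [:: p0; p1; p2; p3] x) => /=; apply.
  by rewrite !pE.
- rewrite conjMg !tpermJ; apply: Dq; move: (@uniqp [:: p0; p2; p1; p3] x) => /=; apply.
  by rewrite !pE.
- rewrite conjMg !tpermJ; apply: Dq; move: (@uniqp [:: p0; p3; p1; p2] x) => /=; apply.
  by rewrite !pE.
Qed.

Lemma V4p3 g : g \in V4 -> g p3 = p3 -> g = 1.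
Proof.
rewrite memV4 /inV4b /vals; case/or4P => /eqP [e0 e1 e2 e3] H; rewrite e3 in H.
- by apply: eq_vals; rewrite /vals !perm1 e0 e1 e2 e3.
all: by move/eqP: H; rewrite !pE.
Qed.

Lemma V4trans y : exists2 k, k \in V4 & k p3 = y.
Proof.
case: (ord4P y) => ->;
 [exists (tperm p0 p3 * tperm p1 p2) | exists (tperm p0 p2 * tperm p1 p3)
 | exists (tperm p0 p1 * tperm p2 p3) | exists 1];
 rewrite /V4 ?inE ?eqxx ?orbT //; rewrite ?permM ?perm1 ?tpE !pE; apply/eqP; by vm_compute.
Qed.

Lemma tperm_notV4 (a b : 'I_4) : a != b -> tperm a b \notin V4.
Proof.
apply/implyP; rewrite memV4 /inV4b /vals !tpE !pE; move: a b; apply: allL2; by vm_compute.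
Qed.

Lemma fourth (a b c x y : 'I_4) : uniq [:: a; b; c] -> x \notin [:: a; b; c] ->
  y \notin [:: a; b; c] -> y = x.
Proof.
have key : forall a b c x y : 'I_4, uniq [:: a; b; c] ==> ((x \notin [:: a; b; c]) ==>
  ((y \notin [:: a; b; c]) ==> (y == x))) by apply: allL5; vm_compute.
by move=> H1 H2 H3; apply/eqP; move: (key a b c x y); rewrite H1 H2 H3.
Qed.

End Helpers.
Set Implicit Arguments. Unset Strict Implicit. Unset Printing Implicit Defensive.

Section B.
Local Open Scope group_scope.
Implicit Types (g h k nu mu : 'S_4) (A B C : tab) (X Y : {set tab}).

Lemma tabact1 A : tabact 1 A = A.
Proof. by apply/ffunP => i; rewrite ffunE imset_perm1. Qed.

Lemma tabactM g h A : tabact (g * h) A = tabact h (tabact g A).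
Proof.
apply/ffunP => i; rewrite !ffunE -imset_comp; apply: eq_imset => x; by rewrite permM.
Qed.

Lemma tabactK g A : tabact g^-1 (tabact g A) = A.
Proof. by rewrite -tabactM mulgV tabact1. Qed.

Lemma tabactKV g A : tabact g (tabact g^-1 A) = A.
Proof. by rewrite -tabactM mulVg tabact1. Qed.

Lemma tabact_inj g : injective (tabact g).
Proof. by move=> A B H; rewrite -(tabactK g A) H tabactK. Qed.

Lemma orbGP A B : reflect (exists2 g, g \in V4 & B = tabact g A) (B \in orbG V4 A).
Proof. exact: imsetP. Qed.

Lemma orbG_self A : A \in orbG V4 A.
Proof. by apply/orbGP; exists 1; rewrite ?V4_1 ?tabact1. Qed.

Lemma orbG_act g A : g \in V4 -> tabact g A \in orbG V4 A.
Proof. by move=> Hg; apply/orbGP; exists g. Qed.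

Lemma orbG_eq A B : B \in orbG V4 A -> orbG V4 B = orbG V4 A.
Proof.
case/orbGP => g Hg ->; apply/setP => C; apply/orbGP/orbGP => [[k Hk ->]|[k Hk ->]].
  by exists (g * k); rewrite ?V4M // tabactM.
exists (g^-1 * k); first by rewrite V4M // V4V.
by rewrite -tabactM mulKVg.
Qed.

Lemma orbG_nu nu A B : B \in orbG V4 A -> orbG V4 (tabact nu B) = orbG V4 (tabact nu A).
Proof.
case/orbGP => g Hg ->; apply: orbG_eq.
rewrite -tabactM conjgC tabactM; apply: orbG_act; exact: V4J.
Qed.

Lemma orbG_eqP A B : orbG V4 A = orbG V4 B -> exists2 g, g \in V4 & B = tabact g A.
Proof. by move=> H; apply/orbGP; rewrite H orbG_self. Qed.

Lemma shape_act g A : Defs.shape (tabact g A) = Defs.shape A.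
Proof. rewrite /Defs.shape; apply: eq_map => i; rewrite ffunE card_imset //; exact: perm_inj. Qed.

Lemma disj_act g (S T : {set 'I_4}) : [disjoint g @: S & g @: T] = [disjoint S & T].
Proof.
rewrite -!setI_eq0 -(@imsetI _ _ g); first by rewrite imset_eq0.
by move=> x y _ _; apply: perm_inj.
Qed.

Lemma rd_act g A : rows_disjoint (tabact g A) = rows_disjoint A.
Proof.
apply/forallP/forallP => H i; apply/forallP => j; move/forallP: (H i) => /(_ j);
  by rewrite !ffunE disj_act.
Qed.

Lemma Tall_act g A : (tabact g A \in Tall) = (A \in Tall).
Proof. by rewrite !inE shape_act rd_act. Qed.

Lemma Tshape_act g lam A : (tabact g A \in Tshape lam) = (A \in Tshape lam).
Proof. by rewrite !inE shape_act rd_act. Qed.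

Lemma leT_act1 g A B : leT A B -> leT (tabact g A) (tabact g B).
Proof.
move/forallP => H; apply/forallP => i; apply/subsetP => x /bigcupP [j Hj].
rewrite ffunE => /imsetP [y Hy ->].
have : y \in \bigcup_(j0 : 'I_4 | j0 <= i) A j0 by apply/bigcupP; exists j.
move/(subsetP (H i)) => /bigcupP [k Hk Hy'].
by apply/bigcupP; exists k => //; rewrite ffunE; apply: imset_f.
Qed.

Lemma leT_act g A B : leT (tabact g A) (tabact g B) = leT A B.
Proof.
apply/idP/idP; last exact: leT_act1.
by move/(leT_act1 g^-1); rewrite !tabactK.
Qed.

Lemma leO_act1 nu A B : leO (orbG V4 A) (orbG V4 B) ->
  leO (orbG V4 (tabact nu A)) (orbG V4 (tabact nu B)).
Proof.
case/existsP => A' /andP [HA /existsP [B' /andP [HB Hle]]].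
apply/existsP; exists (tabact nu A'); apply/andP; split.
  by rewrite -(orbG_nu nu HA) orbG_self.
apply/existsP; exists (tabact nu B'); apply/andP; split.
  by rewrite -(orbG_nu nu HB) orbG_self.
by rewrite leT_act.
Qed.

Lemma leO_act nu A B : leO (orbG V4 (tabact nu A)) (orbG V4 (tabact nu B)) =
  leO (orbG V4 A) (orbG V4 B).
Proof.
apply/idP/idP; last exact: leO_act1.
by move/(leO_act1 nu^-1); rewrite !tabactK.
Qed.

Lemma hatE nu A : A \in Tall -> hat V4 nu (orbG V4 A) = orbG V4 (tabact nu A).
Proof.
move=> HA; rewrite /hat ffunE (imset_f (orbG V4) HA).
case: pickP => [B HB|H]; first exact: orbG_nu.
by move: (H A); rewrite orbG_self.
Qed.

Lemma hat_out nu X : X \notin TG V4 -> hat V4 nu X = X.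
Proof. by rewrite /hat ffunE => /negbTE ->. Qed.

Lemma TGP X : reflect (exists2 A, A \in Tall & X = orbG V4 A) (X \in TG V4).
Proof. exact: imsetP. Qed.

Lemma hat_TG nu X : X \in TG V4 -> hat V4 nu X \in TG V4.
Proof.
case/TGP => A HA ->; rewrite hatE //; apply/TGP; exists (tabact nu A) => //.
by rewrite Tall_act.
Qed.

Lemma hatM nu mu : hat V4 (nu * mu) = [ffun X => hat V4 mu (hat V4 nu X)].
Proof.
apply/ffunP => X; rewrite [RHS]ffunE.
case: (boolP (X \in TG V4)) => [/TGP [A HA ->]|HX].
  by rewrite !hatE ?tabactM // Tall_act.
by rewrite (hat_out nu HX) !(hat_out _ HX).
Qed.

Lemma hatV4 g X : g \in V4 -> hat V4 g X = X.
Proof.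
move=> Hg; case: (boolP (X \in TG V4)) => [/TGP [A HA ->]|HX]; last by rewrite hat_out.
by rewrite hatE // (orbG_eq (orbG_act A Hg)).
Qed.

Lemma hat1 X : hat V4 1 X = X.
Proof. exact: (hatV4 X V4_1). Qed.

Lemma hatK nu X : hat V4 nu^-1 (hat V4 nu X) = X.
Proof. by have := hatM nu nu^-1; rewrite mulgV => /ffunP /(_ X); rewrite hat1 [RHS]ffunE. Qed.

Lemma hatKV nu X : hat V4 nu (hat V4 nu^-1 X) = X.
Proof. by have := hatK nu^-1 X; rewrite invgK. Qed.

Lemma Aut0_hat nu : Aut0 V4 (hat V4 nu).
Proof.
split.
- exact: hat_TG.
- by move=> X Y _ _ H; rewrite -(hatK nu X) H hatK.
- move=> Y HY; exists (hat V4 nu^-1 Y); first exact: hat_TG.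
  exact: hatKV.
- move=> X Y /TGP [A HA ->] /TGP [B HB ->]; by rewrite !hatE // leO_act.
- move=> lam Hlam; apply/setP => X; apply/imsetP/imsetP => [[Y /imsetP [A HA ->] ->]|[A HA ->]].
    have HA' : A \in Tall by move: HA; rewrite !inE => /andP [/eqP -> ->]; rewrite Hlam.
    exists (tabact nu A); first by rewrite Tshape_act.
    by rewrite hatE.
  have HA' : A \in Tall by move: HA; rewrite !inE => /andP [/eqP -> ->]; rewrite Hlam.
  exists (orbG V4 (tabact nu^-1 A)); first by apply: imset_f; rewrite Tshape_act.
  by rewrite hatE ?tabactKV // Tall_act.
Qed.

End B.
Set Implicit Arguments. Unset Strict Implicit. Unset Printing Implicit Defensive.

Section C.
Local Open Scope group_scope.
Implicit Types (g h k nu mu : 'S_4) (A B C : tab) (X Y : {set tab}).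

Lemma enum4 : enum 'I_4 = [:: p0; p1; p2; p3].
Proof. by apply: (inj_map val_inj); rewrite val_enum_ord !pE. Qed.

Lemma shapeE A : Defs.shape A = [:: #|A p0|; #|A p1|; #|A p2|; #|A p3|].
Proof. by rewrite /Defs.shape enum4. Qed.

Lemma pne01 : (p0 == p1) = false. Proof. by rewrite !pE. Qed.

Lemma rd4 A : [disjoint A p0 & A p1] -> [disjoint A p0 & A p2] -> [disjoint A p0 & A p3] ->
  [disjoint A p1 & A p2] -> [disjoint A p1 & A p3] -> [disjoint A p2 & A p3] ->
  rows_disjoint A.
Proof.
move=> h01 h02 h03 h12 h13 h23; apply/forallP => i; apply/forallP => j; apply/implyP.
case: (ord4P i) => ->; case: (ord4P j) => -> //; rewrite ?eqxx // => _;
  by rewrite disjoint_sym.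
Qed.

Definition A0 : tab := [ffun r => [set r]].

Lemma A0_Tall : A0 \in Tall.
Proof.
rewrite inE shapeE !ffunE !cards1 /=; apply: rd4; rewrite !ffunE disjoints1 inE;
  by rewrite !pE.
Qed.

Lemma actA0 g : tabact g A0 = [ffun r => [set g r]].
Proof. by apply/ffunP => r; rewrite !ffunE imset_set1. Qed.

Lemma actA0_inj g h : tabact g A0 = tabact h A0 -> g = h.
Proof.
rewrite !actA0 => /ffunP H; apply/permP => r; move: (H r); rewrite !ffunE.
exact: set1_inj.
Qed.

Lemma orbA0 g h : orbG V4 (tabact g A0) = orbG V4 (tabact h A0) -> exists2 k, k \in V4 & h = g * k.
Proof.
move/orbG_eqP => [k Hk]; rewrite -tabactM => /actA0_inj ->; by exists k.
Qed.

Lemma kernelE : [set nu : 'S_4 | [forall X in TG V4, hat V4 nu X == X]] = V4.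
Proof.
apply/setP => nu; rewrite inE; apply/forallP/idP => [H|Hnu X].
  move: (H (orbG V4 A0)); rewrite (imset_f _ A0_Tall) /= hatE ?A0_Tall // => /eqP.
  rewrite -{2}(tabact1 A0) => /esym /orbA0 [k Hk]; by rewrite mul1g => ->.
by apply/implyP => _; rewrite hatV4.
Qed.

Definition s3 (x : 'S_3) : 'S_4 := lift_perm p3 p3 x.

Lemma s3M x y : s3 (x * y) = s3 x * s3 y.
Proof. by rewrite /s3 lift_permM. Qed.

Lemma s3p3 x : s3 x p3 = p3.
Proof. exact: lift_perm_id. Qed.

Lemma s3_inj : injective s3.
Proof.
move=> x y H; apply/permP => k; apply: (@lift_inj _ p3).
by rewrite -(lift_perm_lift p3 p3 x) -(lift_perm_lift p3 p3 y) -/(s3 x) -/(s3 y) H.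
Qed.

Lemma s3_onto h : h p3 = p3 -> exists x, h = s3 x.
Proof.
move=> Hh.
have Hne (k : 'I_3) : p3 != h (lift p3 k).
  by rewrite -{1}Hh (inj_eq perm_inj) neq_lift.
pose f (k : 'I_3) : 'I_3 := odflt k (unlift p3 (h (lift p3 k))).
have fE (k : 'I_3) : lift p3 (f k) = h (lift p3 k).
  rewrite /f; case: unliftP (Hne k) => [j _ //|->]; by rewrite eqxx.
have f_inj : injective f.
  by move=> a b e; apply: (@lift_inj _ p3); apply: (@perm_inj _ h); rewrite -!fE e.
exists (perm f_inj); apply/permP => i; rewrite /s3.
case: (unliftP p3 i) => [j ->|->]; last by rewrite lift_perm_id Hh.
by rewrite lift_perm_lift permE fE.
Qed.

Lemma decomp nu : exists2 g, g \in V4 & exists x, nu = g * s3 x.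
Proof.
have [k Hk Hkp] := V4trans (nu^-1 p3).
have [x Hx] : exists x, k * nu = s3 x.
  by apply: s3_onto; rewrite permM Hkp permKV.
exists k^-1; first by rewrite V4V.
by exists x; rewrite -Hx mulKg.
Qed.

Lemma orb_s3_inj x y : orbG V4 (tabact (s3 x) A0) = orbG V4 (tabact (s3 y) A0) -> x = y.
Proof.
case/orbA0 => k Hk e.
have Hk3 : k p3 = p3 by move: (s3p3 y); rewrite e permM s3p3.
by move: e; rewrite (V4p3 Hk Hk3) mulg1 => /s3_inj ->.
Qed.

Lemma hat_V4mul g nu : g \in V4 -> hat V4 (g * nu) = hat V4 nu.
Proof. by move=> Hg; apply/ffunP => X; rewrite hatM [LHS]ffunE (hatV4 X Hg). Qed.

Definition phi (x : 'S_3) := hat V4 (s3 x).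

Lemma phi_inj : injective phi.
Proof.
move=> x y /ffunP /(_ (orbG V4 A0)); rewrite /phi !hatE ?A0_Tall //.
exact: orb_s3_inj.
Qed.

Lemma phiM x y : phi (x * y) = [ffun X => phi y (phi x X)].
Proof. by rewrite /phi s3M hatM. Qed.

Lemma phi_im : [set phi x | x : 'S_3] = hidden.
Proof.
apply/setP => f; apply/imsetP/imsetP => [[x _ ->]|[nu _ ->]].
  by exists (s3 x).
have [g Hg [x ->]] := decomp nu.
by exists x => //; rewrite /phi hat_V4mul.
Qed.

Lemma hidden_card : #|hidden| = 6.
Proof. by rewrite -phi_im card_imset ?cardsT ?card_Sn //; exact: phi_inj. Qed.

End C.
Set Implicit Arguments. Unset Strict Implicit. Unset Printing Implicit Defensive.

Section D.

Implicit Types (g h k nu mu : 'S_4) (A B C : tab) (X Y : {set tab}).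

Lemma Tshape1P A : A \in Tshape [:: 1; 1; 1; 1]%N -> exists s, A = tabact s A0.
Proof.
rewrite inE shapeE => /andP [/eqP [c0 c1 c2 c3] Hd].
have c (i : 'I_4) : #|A i| = 1 by case: (ord4P i) => ->.
pose f (i : 'I_4) := odflt i [pick x in A i].
have fE i : A i = [set f i].
  have /cards1P [x Hx] : #|A i| == 1 by rewrite c.
  rewrite /f; case: pickP => [y|/(_ x)]; rewrite Hx inE ?eqxx //.
  by move/eqP ->.
have f_inj : injective f.
  move=> i j e; apply/eqP; apply/negPn/negP => ne.
  move/forallP: Hd => /(_ i) /forallP /(_ j); rewrite ne /= fE (fE j) e.
  by rewrite disjoints1 inE eqxx.
exists (perm f_inj); apply/ffunP => r; by rewrite actA0 !ffunE permE fE.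
Qed.

Lemma actA0_T1 s : tabact s A0 \in Tshape [:: 1; 1; 1; 1]%N.
Proof.
rewrite Tshape_act inE; move: A0_Tall; rewrite inE => /andP [_ ->].
by rewrite shapeE !ffunE !cards1.
Qed.

Definition psi (x : 'S_3) := orbG V4 (tabact (s3 x) A0).

Lemma TG1E : TshapeG V4 [:: 1; 1; 1; 1]%N = [set psi x | x : 'S_3].
Proof.
apply/setP => X; apply/imsetP/imsetP => [[A HA ->]|[x _ ->]].
  have [nu ->] := Tshape1P HA.
  have [g Hg [x ->]] := decomp nu.
  exists x => //; rewrite /psi tabactM; apply: orbG_nu; exact: orbG_act.
by exists (tabact (s3 x) A0) => //; apply: actA0_T1.
Qed.

Lemma TG1_card : #|TshapeG V4 [:: 1; 1; 1; 1]%N| = 6.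
Proof.
rewrite TG1E card_imset ?cardsT ?card_Sn //; move=> x y; exact: orb_s3_inj.
Qed.

Lemma TG1_elem X : X \in TshapeG V4 [:: 1; 1; 1; 1]%N -> exists s, X = orbG V4 (tabact s A0).
Proof. by case/imsetP => A /Tshape1P [s ->] ->; exists s. Qed.

Lemma hat_notfix nu X : nu \notin V4 -> X \in TshapeG V4 [:: 1; 1; 1; 1]%N -> hat V4 nu X != X.
Proof.
move=> Hnu /TG1_elem [s ->]; rewrite hatE ?Tall_act ?A0_Tall // -tabactM.
apply/eqP => /esym /orbA0 [k Hk] /(mulgI s) e; by rewrite e Hk in Hnu.
Qed.

Lemma V4inv2 g a : g \in V4 -> g (g a) = a.
Proof. by move=> Hg; rewrite -permM V4sq // perm1. Qed.

Lemma three_cycle nu (a b c : 'I_4) : [&& a != b, b != c & a != c] ->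
  nu a = b -> nu b = c -> nu c = a -> nu \notin V4 /\ (nu * nu * nu = 1)%g.
Proof.
case/and3P => ab bc ac ea eb ec; split.
  apply/negP => /(@V4inv2 nu a); rewrite ea eb => e; by rewrite e eqxx in ac.
apply/permP => x; rewrite !permM perm1.
have Hu : uniq [:: a; b; c] by rewrite /= !inE negb_or ab ac bc.
case: (boolP (x \in [:: a; b; c])) => [|Hx].
  by rewrite !inE => /or3P [] /eqP ->; rewrite ?ea ?eb ?ec ?ea ?eb ?ec ?ea ?eb ?ec.
have Hnx : nu x \notin [:: a; b; c].
  apply/negP; rewrite !inE => /or3P [] /eqP; [rewrite -ec | rewrite -ea | rewrite -eb] => /perm_inj e; by move: Hx; rewrite e !inE eqxx ?orbT.
have e := fourth Hu Hx Hnx; by rewrite !e.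
Qed.

End D.
Set Implicit Arguments. Unset Strict Implicit. Unset Printing Implicit Defensive.

Section E.
Implicit Types (g h nu mu : 'S_4) (A B C : tab) (X Y : {set tab}).

Lemma normV4 : 'N(V4)%g = [set: 'S_4].
Proof.
apply/setP => x; rewrite inE in_setT; apply/subsetP => y /imsetP [g Hg ->].
exact: V4J.
Qed.

Lemma imsetCp nu (S : {set 'I_4}) : nu @: (~: S) = ~: (nu @: S).
Proof.
apply/setP => x; rewrite -(permKV nu x) !inE !mem_imset ?inE //; exact: perm_inj.
Qed.

Lemma set2C (a b : 'I_4) : [set a; b] = [set b; a].
Proof. by apply/setP => x; rewrite !inE orbC. Qed.

Lemma e10 : (p1 == p0) = false. Proof. by rewrite !pE. Qed.
Lemma e20 : (p2 == p0) = false. Proof. by rewrite !pE. Qed.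
Lemma e30 : (p3 == p0) = false. Proof. by rewrite !pE. Qed.
Lemma e21 : (p2 == p1) = false. Proof. by rewrite !pE. Qed.
Lemma e31 : (p3 == p1) = false. Proof. by rewrite !pE. Qed.
Lemma e32 : (p3 == p2) = false. Proof. by rewrite !pE. Qed.
Definition pne := (e10, e20, e30, e21, e31, e32).

Lemma tabP_act nu i j : tabact nu (tabP i j) = tabP (nu i) (nu j).
Proof.
apply/ffunP => r; rewrite !ffunE; case: ifP => _; first by rewrite imsetU1 imset_set1.
by case: ifP => _; rewrite ?imsetCp ?imsetU1 ?imset_set1 ?imset0.
Qed.

Lemma tabP_sym i j : tabP i j = tabP j i.
Proof. by rewrite /tabP set2C. Qed.

Lemma tabP_Tall i j : i != j -> tabP i j \in Tall.
Proof.
move=> Hij; rewrite inE shapeE !ffunE !eqxx !pne cards2 Hij cards0.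
have -> : #|~: [set i; j]| = 2 by move: (cardsC [set i; j]); rewrite cards2 Hij card_ord => -[].
apply/andP; split; first by [].
apply: rd4; rewrite !ffunE ?eqxx ?pne -setI_eq0 ?setICr ?setI0 ?set0I ?eqxx //.
Qed.

Definition tq (a b c d : 'I_4) : tab :=
  [ffun r : 'I_4 => if r == p0 then [set a; b] else if r == p1 then [set c]
                    else if r == p2 then [set d] else set0].

Lemma tq_act nu a b c d : tabact nu (tq a b c d) = tq (nu a) (nu b) (nu c) (nu d).
Proof.
apply/ffunP => r; rewrite !ffunE.
by do ?case: ifP => _; rewrite ?imsetU1 ?imset_set1 ?imset0.
Qed.

Lemma tq_sym a b c d : tq a b c d = tq b a c d.
Proof. by rewrite /tq set2C. Qed.

Lemma uniq4E (a b c d : 'I_4) : uniq [:: a; b; c; d] =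
  [&& a != b, a != c, a != d, b != c, b != d & c != d].
Proof. by rewrite /= !inE !negb_or -!andbA andbT. Qed.

Lemma tq_Tall a b c d : uniq [:: a; b; c; d] -> tq a b c d \in Tall.
Proof.
rewrite uniq4E => /and5P [ab ac ad bc /andP [bd cd]].
rewrite inE shapeE !ffunE !eqxx !pne cards2 ab !cards1 cards0.
apply/andP; split; first by [].
apply: rd4; rewrite !ffunE ?eqxx ?pne ?disjoints1 ?(disjoint_sym _ [set c]) ?(disjoint_sym _ [set d])
  ?disjoints1 ?inE.
all: try by rewrite ?cd.
- by rewrite negb_or eq_sym ac eq_sym bc.
- by rewrite negb_or eq_sym ad eq_sym bd.
- by rewrite -setI_eq0 setI0.
Qed.

Lemma tabQ_dec i j : i != j -> exists c, exists d, uniq [:: i; j; c; d] /\ tabQ i j = tq i j c d.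
Proof.
move=> Hij.
have cC : #|~: [set i; j]| = 2 by move: (cardsC [set i; j]); rewrite cards2 Hij card_ord => -[].
rewrite /tabQ; case: pickP => [k Hk|H0]; last first.
  by move: cC; rewrite (eq_card0 H0).
have : #|~: [set i; j] :\ k| == 1 by move: cC; rewrite (cardsD1 k) Hk add1n => -[] ->.
case/cards1P => d Hd.
have : d \in ~: [set i; j] :\ k by rewrite Hd set11.
rewrite !inE negb_or => /andP [dk /andP [di dj]].
move: Hk; rewrite !inE negb_or => /andP [ki kj].
exists k, d; split.
  by rewrite uniq4E Hij eq_sym ki eq_sym di eq_sym kj eq_sym dj eq_sym dk.
by apply/ffunP => r; rewrite !ffunE /= Hd.
Qed.

Lemma G1 (a b c d : 'I_4) : uniq [:: a; b; c; d] ->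
  [&& (tperm a b * tperm c d)%g a == b, (tperm a b * tperm c d)%g b == a,
      (tperm a b * tperm c d)%g c == d & (tperm a b * tperm c d)%g d == c].
Proof. apply/implyP; rewrite !permM !tpE; move: a b c d; apply: allL4; by vm_compute. Qed.

Lemma G2 (a b c d : 'I_4) : uniq [:: a; b; c; d] ->
  [&& uniq [:: a; c; b; d], (tperm a c * tperm b d)%g a == c, (tperm a c * tperm b d)%g b == d,
      (tperm a c * tperm b d)%g c == a & (tperm a c * tperm b d)%g d == b].
Proof. apply/implyP; rewrite !permM !tpE; move: a b c d; apply: allL4; by vm_compute. Qed.

Lemma U2 (a b c d : 'I_4) : uniq [:: a; b; c; d] -> uniq [:: c; d; a; b].
Proof. apply/implyP; move: a b c d; apply: allL4; by vm_compute. Qed.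

Lemma cd_cases (i j c d k l : 'I_4) : uniq [:: i; j; c; d] -> uniq [:: i; j; k; l] ->
  (c = k /\ d = l) \/ (c = l /\ d = k).
Proof.
have key : forall i j c d k l : 'I_4, uniq [:: i; j; c; d] ==> (uniq [:: i; j; k; l] ==>
  ((c == k) && (d == l) || (c == l) && (d == k))) by apply: allL6; vm_compute.
move=> H1 H2; move: (key i j c d k l); rewrite H1 H2 /=.
by case/orP => /andP [/eqP -> /eqP ->]; [left|right].
Qed.

Lemma setT_uniq (i j k l : 'I_4) : [set i; j; k; l] = [set: 'I_4] -> uniq [:: i; j; k; l].
Proof.
move=> H.
have : [&& p0 \in [set i; j; k; l], p1 \in [set i; j; k; l], p2 \in [set i; j; k; l]
         & p3 \in [set i; j; k; l]] by rewrite H !in_setT.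
clear H; apply/implyP; rewrite !inE !pE; move: i j k l; apply: allL4; by vm_compute.
Qed.

Lemma swapQ a b c d : uniq [:: a; b; c; d] -> orbG V4 (tq a b d c) = orbG V4 (tq a b c d).
Proof.
move=> U; case/and4P: (G1 U) => /eqP ea /eqP eb /eqP ec /eqP ed.
have E : tabact (tperm a b * tperm c d)%g (tq a b c d) = tq a b d c.
  by rewrite tq_act ea eb ec ed tq_sym.
rewrite -E; apply: orbG_eq; apply: orbG_act; exact: Dq.
Qed.

Lemma flipQ a b c d : uniq [:: a; b; c; d] -> orbG V4 (tq c d a b) = orbG V4 (tq a b c d).
Proof.
move=> U; case/and5P: (G2 U) => U' /eqP ea /eqP eb /eqP ec /eqP ed.
have E : tabact (tperm a c * tperm b d)%g (tq a b c d) = tq c d a b.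
  by rewrite tq_act ea eb ec ed.
rewrite -E; apply: orbG_eq; apply: orbG_act; exact: Dq.
Qed.

Lemma QE i j k l : uniq [:: i; j; k; l] -> Q i j = orbG V4 (tq i j k l).
Proof.
move=> U; have Hij : i != j by move: U; rewrite uniq4E => /and5P [].
have [c [d [U' e]]] := tabQ_dec Hij.
rewrite /Q e; case: (cd_cases U' U) => [[-> ->]|[-> ->]] //.
by rewrite swapQ.
Qed.

Lemma Quniq i j k l : uniq [:: i; j; k; l] -> Q i j = Q k l.
Proof. by move=> U; rewrite (QE U) (QE (U2 U)) (flipQ U). Qed.

Lemma Puniq i j k l : uniq [:: i; j; k; l] -> P i j = P k l.
Proof.
move=> U; case/and5P: (G2 (a:=i) (b:=j) (c:=k) (d:=l) U) => U' _ _ _ _.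
have Hg := Dq U'.
have [e1 e2] : (tperm i k * tperm j l)%g i = k /\ (tperm i k * tperm j l)%g j = l.
  by case/and4P: (G1 U') => /eqP -> _ /eqP -> _.
have E : tabact (tperm i k * tperm j l)%g (tabP i j) = tabP k l by rewrite tabP_act e1 e2.
rewrite /P -E; apply: esym; apply: orbG_eq; exact: orbG_act.
Qed.

Lemma hatP nu i j : i != j -> hat V4 nu (P i j) = P (nu i) (nu j).
Proof. by move=> Hij; rewrite /P hatE ?tabP_Tall // tabP_act. Qed.

Lemma hatQ nu i j : i != j -> hat V4 nu (Q i j) = Q (nu i) (nu j).
Proof.
move=> Hij; have [c [d [U e]]] := tabQ_dec Hij.
have U' : uniq [:: nu i; nu j; nu c; nu d] := uniqp nu U.
by rewrite (QE U') [in LHS]/Q e hatE ?tq_Tall // tq_act.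
Qed.

End E.

Lemma hat_comp (nu mu : 'S_4) X : hat V4 (nu * mu)%g X = hat V4 mu (hat V4 nu X).
Proof. by rewrite hatM [LHS]ffunE. Qed.

Theorem proposition10p1p2 :
  (* the normalizer of G in S_4 is S_4 *)
  'N(V4)%g = [set: 'S_4] /\
  (* nu-hat is well defined on G-orbits and is the map O_G(A) |-> O_G(nu A) *)
  (forall (nu : 'S_4) (A B : tab), A \in Tall -> B \in orbG V4 A ->
       orbG V4 (tabact nu B) = orbG V4 (tabact nu A)) /\
  (forall (nu : 'S_4) (A : tab), A \in Tall ->
       hat V4 nu (orbG V4 A) = orbG V4 (tabact nu A)) /\
  (* nu |-> nu-hat is a homomorphism S_4 -> Aut_0(T_{4;G}) *)
  (forall nu : 'S_4, Aut0 V4 (hat V4 nu)) /\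
  (forall nu mu : 'S_4, hat V4 (nu * mu)%g = [ffun X => hat V4 mu (hat V4 nu X)]) /\
  (* its kernel is G *)
  [set nu : 'S_4 | [forall X in TG V4, hat V4 nu X == X]] = V4 /\
  (* its image has order 6 and is isomorphic to S_3 *)
  #|hidden| = 6 /\
  (exists phi : 'S_3 -> {ffun {set tab} -> {set tab}},
      [/\ injective phi,
          forall x y : 'S_3, phi (x * y)%g = [ffun X => phi y (phi x X)] &
          [set phi x | x : 'S_3] = hidden]) /\
  (* P_ij = P_kl, Q_ij = Q_kl *)
  (forall i j k l : 'I_4, [set i; j; k; l] = [set: 'I_4] ->
       P i j = P k l /\ Q i j = Q k l) /\
  (* nu-hat(P_ij) = P_{nu(i)nu(j)}, nu-hat(Q_ij) = Q_{nu(i)nu(j)} *)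
  (forall (nu : 'S_4) (i j : 'I_4), i != j ->
       hat V4 nu (P i j) = P (nu i) (nu j) /\ hat V4 nu (Q i j) = Q (nu i) (nu j)) /\
  (* (13)-hat swaps P_12, P_14, fixes P_13; likewise for Q *)
  (let t := tperm p0 p2 in
   [/\ hat V4 t (P p0 p1) = P p0 p3, hat V4 t (P p0 p3) = P p0 p1 &
       hat V4 t (P p0 p2) = P p0 p2] /\
   [/\ hat V4 t (Q p0 p1) = Q p0 p3, hat V4 t (Q p0 p3) = Q p0 p1 &
       hat V4 t (Q p0 p2) = Q p0 p2]) /\
  (* T_{(1^4);G} has six elements *)
  #|TshapeG V4 [:: 1; 1; 1; 1]| = 6 /\
  (* a transposition acts on it as a product of three disjoint transpositions *)
  (forall a b : 'I_4, a != b ->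
     {in TshapeG V4 [:: 1; 1; 1; 1], forall X,
        hat V4 (tperm a b) X != X /\ hat V4 (tperm a b) (hat V4 (tperm a b) X) = X}) /\
  (* a 3-cycle acts on it as a product of two disjoint 3-cycles *)
  (forall (nu : 'S_4) (a b c : 'I_4), [&& a != b, b != c & a != c] ->
     nu a = b -> nu b = c -> nu c = a ->
     {in TshapeG V4 [:: 1; 1; 1; 1], forall X,
        hat V4 nu X != X /\ hat V4 nu (hat V4 nu (hat V4 nu X)) = X}).
Proof.
split; first exact: normV4.
split; first by move=> nu A B _; exact: orbG_nu.
split; first by move=> nu A HA; exact: hatE.
split; first exact: Aut0_hat.
split; first exact: hatM.
split; first exact: kernelE.
split; first exact: hidden_card.
split; first by exists phi; split; [exact: phi_inj | exact: phiM | exact: phi_im].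
split; first by move=> i j k l /setT_uniq U; split; [exact: Puniq | exact: Quniq].
split; first by move=> nu i j Hij; split; [exact: hatP | exact: hatQ].
split.
  have e0 : tperm p0 p2 p0 = p2 := tpermL _ _.
  have e2 : tperm p0 p2 p2 = p0 := tpermR _ _.
  have e1 : tperm p0 p2 p1 = p1 by rewrite tpE !pE.
  have e3 : tperm p0 p2 p3 = p3 by rewrite tpE !pE.
  have n01 : p0 != p1 by rewrite !pE.
  have n02 : p0 != p2 by rewrite !pE.
  have n03 : p0 != p3 by rewrite !pE.
  rewrite /=; split; split.
  - by rewrite hatP // e0 e1; apply: Puniq; rewrite !pE.
  - by rewrite hatP // e0 e3; apply: Puniq; rewrite !pE.
  - by rewrite hatP // e0 e2 /P tabP_sym.
  - by rewrite hatQ // e0 e1; apply: Quniq; rewrite !pE.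
  - by rewrite hatQ // e0 e3; apply: Quniq; rewrite !pE.
  - rewrite hatQ // e0 e2 (@QE p2 p0 p1 p3) ?(@QE p0 p2 p1 p3) 1?tq_sym //; by rewrite !pE.
split; first exact: TG1_card.
split.
  move=> a b ab X HX; split; first exact: hat_notfix (tperm_notV4 ab) HX.
  by rewrite -hat_comp tperm2 hat1.
move=> nu a b c H ea eb ec X HX.
have [Hn H3] := three_cycle H ea eb ec.
split; first exact: hat_notfix Hn HX.
by rewrite -!hat_comp mulgA H3 hat1.
Qed.
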